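(* Let $(P_t)_{t\in\mathbb{R}_+}$ be a stochastically monotone Feller semigroup on $\mathbb{R}$, and define Markov kernels $\tilde{P}_t$ on $\overline{\mathbb{R}}$ by $\tilde{P}_t(x,B)=P_t(x,B\cap\mathbb{R})$ for $x\in\mathbb{R}$, $\tilde{P}_t(+\infty,\cdot)=\delta_{+\infty}$ and $\tilde{P}_t(-\infty,\cdot)=\delta_{-\infty}$. Then $(\tilde{P}_t)_{t\ge0}$ is a Feller semigroup on $\overline{\mathbb{R}}$: for every $t\ge0$ and every continuous $f:\overline{\mathbb{R}}\to\mathbb{R}$, $\tilde{P}_tf$ is continuous on $\overline{\mathbb{R}}$, and $\lim_{t\to0^+}\sup_{x\in\overline{\mathbb{R}}}|\tilde{P}_tf(x)-f(x)|=0$.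
   Context: $\overline{\mathbb{R}}=[-\infty,+\infty]$ with metric $d_1(x,y)=|\tanh y-\tanh x|$, a compact metric space. A Markov semigroup $(P_t)$ ($P_0(x,\cdot)=\delta_x$, $P_{s+t}=P_sP_t$) on $\mathbb{R}$ is Feller if $P_tf\in\mathcal{C}_0(\mathbb{R})$ for $f\in\mathcal{C}_0(\mathbb{R})$ (continuous, vanishing at $\pm\infty$) and $\sup_x|P_tf(x)-f(x)|\to0$ as $t\to0^+$; it is stochastically monotone if $P_tf$ is non-decreasing whenever $f$ is bounded, Borel and non-decreasing. *)

(* Defs.v *)
From HB Require Import structures.
From mathcomp Require Import all_boot all_order all_algebra.
From mathcomp Require Import all_classical all_reals all_analysis measurable_realfun.
Import Order.TTheory GRing.Theory Num.Theory numFieldNormedType.Exports.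

Set Implicit Arguments.
Unset Strict Implicit.
Unset Printing Implicit Defensive.

Local Open Scope classical_set_scope.
Local Open Scope ring_scope.

(* A family of Markov (probability) kernels on R indexed by time t : R
   (only t >= 0 is relevant). *)
Notation kfamily R := (R -> R.-pker R ~> R).

Definition Pact (R : realType) (P : kfamily R) (t : R) (f : R -> R) (x : R) : R :=
  fine (\int[P t x]_y (f y)%:E)%E.

Definition C0 (R : realType) (f : R -> R) : Prop :=
  continuous f /\ f x @[x --> +oo] --> 0 /\ f x @[x --> -oo] --> 0.

Definition markov_semigroup (R : realType) (P : kfamily R) : Prop :=
  (forall x (A : set R), measurable A -> P 0 x A = \d_x A) /\
  (forall s t, 0 <= s -> 0 <= t -> forall x (A : set R), measurable A ->
     P (s + t) x A = (\int[P s x]_y P t y A)%E).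

Definition feller (R : realType) (P : kfamily R) : Prop :=
  (forall t, 0 <= t -> forall f, C0 f -> C0 (Pact P t f)) /\
  (forall f, C0 f -> forall e : R, 0 < e ->
     \forall t \near 0^'+, forall x, `|Pact P t f x - f x| <= e).

Definition stoch_monotone (R : realType) (P : kfamily R) : Prop :=
  forall t, 0 <= t -> forall f : R -> R,
    (exists M : R, forall x, `|f x| <= M) -> measurable_fun setT f ->
    {homo f : x y / x <= y} -> {homo Pact P t f : x y / x <= y}.

Definition pushEFin (R : realType) (mu : {measure set R -> \bar R})
  : {measure set \bar R -> \bar R}.
Proof.
refine (pushforward mu (@EFin R) : {measure set \bar R -> \bar R}).
exact: EFin_measurable.
Defined.

Definition Ptilde (R : realType) (P : kfamily R) (t : R) (x : \bar R)
  : {measure set \bar R -> \bar R} :=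
  match x with
  | EFin r => pushEFin (P t r)
  | +oo%E => \d_(+oo%E : \bar R)
  | -oo%E => \d_(-oo%E : \bar R)
  end.

Definition Ptilde_act (R : realType) (P : kfamily R) (t : R) (f : \bar R -> R)
  (x : \bar R) : R :=
  fine (\int[Ptilde P t x]_y (f y)%:E)%E.

(* Main.v *)
Require Import Defs.
From HB Require Import structures.
From mathcomp Require Import all_boot all_order all_algebra.
From mathcomp Require Import all_classical all_reals all_analysis measurable_realfun.
From mathcomp Require Import lra.
Import Order.TTheory GRing.Theory Num.Theory numFieldNormedType.Exports.
Local Open Scope classical_set_scope.
Local Open Scope ring_scope.
Set Implicit Arguments.
Unset Strict Implicit.
Unset Printing Implicit Defensive.

Ltac dec := rewrite ?minEle ?maxEle; repeat match goal with
  |- context [if ?x <= ?y then _ else _] =>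
   lazymatch y with context [if _ then _ else _] => fail
   | _ => lazymatch x with context [if _ then _ else _] => fail
   | _ => case: (leP x y) => ? end end end.

Section fns.
Variable R : realType.
Definition cb (f : R -> R) := continuous f /\ exists M, forall x, `|f x| <= M.

Lemma cb_cst c : cb (fun=> c).
Proof. split; first exact: cst_continuous. by exists `|c|. Qed.

Lemma cb_add f g : cb f -> cb g -> cb (fun x => f x + g x).
Proof.
case=> cf [M hM] [cg [N hN]]; split.
  by move=> x; exact: (continuousD (cf x) (cg x)).
exists (M + N) => x; apply: le_trans (ler_normD _ _) _; exact: lerD.
Qed.

Lemma cb_opp f : cb f -> cb (fun x => - f x).
Proof.
case=> cf [M hM]; split; first by move=> x; exact: (continuousN (cf x)).
by exists M => x; rewrite normrN.
Qed.

Lemma cb_sub f g : cb f -> cb g -> cb (fun x => f x - g x).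
Proof. by move=> hf hg; apply: cb_add => //; apply: cb_opp. Qed.

Lemma cb_mul f g : cb f -> cb g -> cb (fun x => f x * g x).
Proof.
case=> cf [M hM] [cg [N hN]]; split.
  by move=> x; exact: (continuousM (cf x) (cg x)).
exists (M * N) => x; rewrite normrM; apply: ler_pM => //.
Qed.

Definition ramp (c y : R) : R := Num.min 1 (Num.max 0 (y - c)).
Definition trap (a b y : R) : R := Num.min (ramp (a - 1) y) (1 - ramp b y).

Lemma ramp_cont c : continuous (ramp c).
Proof.
move=> x.
have h1 : {for x, continuous (fun y : R => (y - c : R^o))}.
  apply: (@continuousB _ _ _ (fun y : R => y) (fun=> c)); first exact: cvg_id.
  exact: cst_continuous.
have h2 := @continuous_max R R (fun=> 0) _ x (@cst_continuous _ _ (0:R) x) h1.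
exact: (@continuous_min R R (fun=> 1) _ x (@cst_continuous _ _ (1:R) x) h2).
Qed.

Lemma ramp_ge0 c y : 0 <= ramp c y.
Proof. rewrite /ramp; dec; lra. Qed.
Lemma ramp_le1 c y : ramp c y <= 1.
Proof. rewrite /ramp; dec; lra. Qed.
Lemma ramp0 c y : y <= c -> ramp c y = 0.
Proof. move=> h; rewrite /ramp; dec; lra. Qed.
Lemma ramp1 c y : c + 1 <= y -> ramp c y = 1.
Proof. move=> h; rewrite /ramp; dec; lra. Qed.
Lemma ramp_mono c x y : x <= y -> ramp c x <= ramp c y.
Proof. move=> h; rewrite /ramp; dec; lra. Qed.

Lemma cb_ramp c : cb (ramp c).
Proof.
split; first exact: ramp_cont.
exists 1 => x; rewrite ger0_norm ?ramp_ge0 ?ramp_le1 //.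
Qed.

Lemma cb_trap a b : cb (trap a b).
Proof.
split.
  move=> x.
  have h1 : {for x, continuous (fun y : R => (1 - ramp b y : R^o))}.
    apply: (@continuousB _ _ _ (fun=> (1:R)) (fun y => ramp b y)); first exact: cst_continuous.
    exact: ramp_cont.
  have h0 : {for x, continuous (fun y : R => (ramp (a-1) y : R^o))}.
    exact: ramp_cont.
  exact: (@continuous_min R R _ _ x h0 h1).
exists 1 => x; rewrite /trap; have := ramp_ge0 (a-1) x; have := ramp_le1 (a-1) x.
have := ramp_ge0 b x; have := ramp_le1 b x.
move=> ? ? ? ?; dec; rewrite ger0_norm; lra.
Qed.

Lemma trap_ge0 a b y : 0 <= trap a b y.
Proof.
rewrite /trap; have := ramp_ge0 (a-1) y; have := ramp_le1 b y; dec; lra.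
Qed.
Lemma trap_le1 a b y : trap a b y <= 1.
Proof.
rewrite /trap; have := ramp_le1 (a-1) y; have := ramp_ge0 b y; dec; lra.
Qed.
Lemma trap_le_ramp a b y : trap a b y <= ramp (a - 1) y.
Proof. by rewrite /trap ge_min lexx. Qed.
Lemma trap_le_ramp' a b y : trap a b y <= 1 - ramp b y.
Proof. by rewrite /trap ge_min lexx orbT. Qed.
Lemma trap1 a b y : a <= y -> y <= b -> trap a b y = 1.
Proof.
move=> h1 h2; rewrite /trap ramp1; last lra.
by rewrite ramp0 // subr0 minxx.
Qed.
Lemma trap0l a b y : y <= a - 1 -> trap a b y = 0.
Proof.
move=> h; rewrite /trap ramp0 //; have := ramp_le1 b y; dec; lra.
Qed.
Lemma trap0r a b y : b + 1 <= y -> trap a b y = 0.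
Proof.
move=> h; rewrite /trap (ramp1 h) subrr; have := ramp_ge0 (a-1) y; dec; lra.
Qed.


Section integ.
Variable mu : {measure set R -> \bar R}.
Hypothesis mu1 : mu setT = 1%E.

Lemma cb_int f : cb f -> mu.-integrable setT (EFin \o f).
Proof.
case=> cf [M hM]; apply: measurable_bounded_integrable => //.
  by rewrite mu1 ltry.
  exact: continuous_measurable_fun.
exists M; split; first by rewrite num_real.
move=> y My x _; apply: le_trans (hM x) _; exact: ltW.
Qed.

Lemma I_cst c : \int[mu]_x ((fun=> c) x) = c.
Proof. by rewrite Rintegral_cst // mu1 /= mulr1. Qed.

Lemma I_D f g : cb f -> cb g -> \int[mu]_x (f x + g x) = \int[mu]_x f x + \int[mu]_x g x.
Proof. by move=> hf hg; rewrite RintegralD //; apply: cb_int. Qed.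

Lemma I_B f g : cb f -> cb g -> \int[mu]_x (f x - g x) = \int[mu]_x f x - \int[mu]_x g x.
Proof. by move=> hf hg; rewrite RintegralB //; apply: cb_int. Qed.

Lemma I_Z f c : cb f -> \int[mu]_x (c * f x) = c * \int[mu]_x f x.
Proof. by move=> hf; rewrite RintegralZl //; apply: cb_int. Qed.

Lemma I_le f g : cb f -> cb g -> (forall x, f x <= g x) ->
  \int[mu]_x f x <= \int[mu]_x g x.
Proof. by move=> hf hg fg; apply: le_Rintegral => //; apply: cb_int. Qed.

Lemma I_approx f g w : cb f -> cb g -> cb w -> (forall x, `|f x - g x| <= w x) ->
  `|\int[mu]_x f x - \int[mu]_x g x| <= \int[mu]_x w x.
Proof.
move=> hf hg hw fg; rewrite -I_B //; rewrite ler_norml; apply/andP; split.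
  rewrite -mulN1r -I_Z //; apply: I_le => //.
  - by apply: cb_mul => //; apply: cb_cst.
  - exact: cb_sub.
  by move=> x; have := fg x; rewrite ler_norml mulN1r => /andP[].
apply: I_le => //; first exact: cb_sub.
by move=> x; have := fg x; rewrite ler_norml => /andP[].
Qed.

Lemma I_lim (u : nat -> R -> R) : (forall n, cb (u n)) ->
  (forall n y, 0 <= u n y <= 1) ->
  (forall y, exists N, forall n, (N <= n)%N -> u n y = 1) ->
  forall e, 0 < e -> exists N, 1 - e <= \int[mu]_x u N x.
Proof.
move=> cu u01 u1 e e0.
have mu_ n : measurable_fun setT (EFin \o u n).
  by apply/measurable_EFinP; exact: continuous_measurable_fun (cu n).1.
have cv : forall x, setT x -> (fun n => (u n x)%:E) @ \oo --> 1%E.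
  move=> y _; have [N hN] := u1 y.
  apply: cvg_near_cst; exists N => // n /= Nn; rewrite hN //.
have bd : forall x n, setT x -> (`|(u n x)%:E| <= 1)%E.
  move=> y n _; have := u01 n y; rewrite /= lee_fin => /andP[h0 h1].
  by rewrite ger0_norm.
have [_ _ h] := @dominated_convergence _ _ _ mu setT measurableT
  (fun n => EFin \o u n) (fun=> 1%E) (fun=> 1%E) mu_
  (measurable_cst _) (aeW _ cv) (cb_int (cb_cst 1)) (aeW _ (fun x n => bd x n)).
move: h; rewrite integral_cst // mu1 mul1e => /fine_cvgP[_].
move/cvgrPdist_le => /(_ e e0) [N _ hN]; exists N.
have := hN N (leqnn N); rewrite /= => h.
have : 1 - \int[mu]_x u N x <= e by apply: le_trans (ler_norm _) h.
lra.
Qed.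
End integ.
End fns.


Lemma filter_and T (F : set_system T) {FF : Filter F} (A B : set T) :
  F A -> F B -> F (fun x => A x /\ B x).
Proof. by move=> a b; apply: filterS2 a b. Qed.

Section main.
Variables (R : realType) (P : R -> R.-pker R ~> R).
Hypotheses (hF : feller P) (hM : stoch_monotone P).

Let mu1 t x : P t x setT = 1%E := prob_kernel x.

Lemma Q_aff t x f c d : cb f -> Pact P t (fun y => c + d * f y) x = c + d * Pact P t f x.
Proof.
move=> hf; change (\int[P t x]_y (c + d * f y) = c + d * \int[P t x]_y f y).
rewrite (I_D (mu1 t x) (cb_cst c)); last by apply: cb_mul => //; exact: cb_cst.
by rewrite (I_Z (mu1 t x)) // (I_cst (mu1 t x)).
Qed.

Lemma Q_cst t x c : Pact P t (fun=> c) x = c.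
Proof. exact: (I_cst (mu1 t x)). Qed.

Lemma Q_B t x f g : cb f -> cb g -> Pact P t (fun y => f y - g y) x = Pact P t f x - Pact P t g x.
Proof. exact: (I_B (mu1 t x)). Qed.

Lemma Q_le t x f g : cb f -> cb g -> (forall y, f y <= g y) -> Pact P t f x <= Pact P t g x.
Proof. exact: (I_le (mu1 t x)). Qed.

Lemma Q_approx t x f g w : cb f -> cb g -> cb w -> (forall y, `|f y - g y| <= w y) ->
  `|Pact P t f x - Pact P t g x| <= Pact P t w x.
Proof. exact: (I_approx (mu1 t x)). Qed.

Lemma Q_mono t c x y : 0 <= t -> x <= y -> Pact P t (ramp c) x <= Pact P t (ramp c) y.
Proof.
move=> t0 xy; apply: (hM t0) => //.
- exists 1 => z; rewrite ger0_norm ?ramp_ge0 ?ramp_le1 //.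
- by apply: continuous_measurable_fun; exact: ramp_cont.
- by move=> u v uv; apply: ramp_mono.
Qed.

Lemma C0_of (h : R -> R) : continuous h -> (exists K, forall y, K < `|y| -> h y = 0) -> C0 h.
Proof.
move=> ch [K hK]; split => //; split.
  apply: cvg_near_cst; exists K; split; first by rewrite num_real.
  move=> y Ky; apply: hK; apply: lt_le_trans Ky (ler_norm _).
apply: cvg_near_cst; exists (- K); split; first by rewrite num_real.
move=> y Ky; apply: hK; rewrite -normrN; apply: lt_le_trans (ler_norm _); lra.
Qed.

Lemma trap_C0 (a b : R) : C0 (trap a b).
Proof.
apply: C0_of; first exact: (cb_trap a b).1.
exists (`|a| + `|b| + 2) => y hy.
have [yb|yb] := leP (b + 1) y; first exact: trap0r.
apply: trap0l; move: hy; have := ler_norm a; have := ler_norm b;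
  have := ler_norm (-a); have := ler_norm (-b); rewrite !normrN.
rewrite ltr_normr => ? ? ? ? /orP[]; lra.
Qed.

Lemma trapM_C0 g (a b : R) : cb g -> C0 (fun y => g y * trap a b y).
Proof.
move=> hg; apply: C0_of; first exact: (cb_mul hg (cb_trap a b)).1.
exists (`|a| + `|b| + 2) => y hy.
have [yb|yb] := leP (b + 1) y; first by rewrite trap0r ?mulr0.
rewrite trap0l ?mulr0 //; move: hy; have := ler_norm a; have := ler_norm b;
  have := ler_norm (-a); have := ler_norm (-b); rewrite !normrN.
rewrite ltr_normr => ? ? ? ? /orP[]; lra.
Qed.


Lemma Q_tail t x g M (a b : R) : cb g -> (forall y, `|g y| <= M) ->
  `|Pact P t g x - Pact P t (fun y => g y * trap a b y) x| <= M * (1 - Pact P t (trap a b) x).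
Proof.
move=> hg hMg.
have h := @Q_approx t x g (fun y => g y * trap a b y) (fun y => M + (- M) * trap a b y) hg
  (cb_mul hg (cb_trap a b)) (cb_add (cb_cst M) (cb_mul (cb_cst (-M)) (cb_trap a b))).
rewrite Q_aff in h; last exact: cb_trap.
have -> : M * (1 - Pact P t (trap a b) x) = M + - M * Pact P t (trap a b) x.
  by rewrite mulrBr mulr1 mulNr.
apply: h => y.
rewrite -{1}[g y]mulr1 -mulrBr normrM (ger0_norm (x := 1 - _)); last first.
  by have := trap_le1 a b y; lra.
have := hMg y; have := trap_ge0 a b y; have := trap_le1 a b y.
move=> ? ? ?; nra.
Qed.

Lemma trap01 (a b y : R) : 0 <= trap a b y <= 1.
Proof. by rewrite trap_ge0 trap_le1. Qed.

Lemma ex_bound (y : R) : exists N : nat, forall n, (N <= n)%N -> `|y| <= n%:R.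
Proof.
exists (Num.Def.archi_bound `|y|) => n Nn.
apply: ltW; apply: lt_le_trans (archi_boundP (normr_ge0 y)) _.
by rewrite ler_nat.
Qed.

Lemma QA t : 0 <= t -> forall g, cb g -> continuous (Pact P t g).
Proof.
move=> t0 g hg x0; have [M0 hM0] := hg.2.
pose M := `|M0| + 1.
have hMg : forall y, `|g y| <= M.
  by move=> y; apply: le_trans (hM0 y) _; rewrite /M; have := ler_norm M0; lra.
have M0' : 0 < M by rewrite /M; have := normr_ge0 M0; lra.
apply/cvgrPdist_le => e e0.
pose d := e / (3 * M + 1).
have d0 : 0 < d by rewrite /d divr_gt0 //; lra.
have hd : (3 * M + 1) * d = e by rewrite /d mulrC divfK //; lra.
have ev : forall y : R, exists N, forall m, (N <= m)%N -> trap (- m%:R) m%:R y = 1.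
  move=> y; have [N hN] := ex_bound y; exists N => m Nm.
  by apply: trap1; have := hN m Nm; rewrite ler_norml => /andP[] //; lra.
have [n hn] := I_lim (mu1 t x0) (u := fun n : nat => trap (- n%:R) n%:R)
  (fun n => cb_trap _ _) (fun n y => trap01 _ _ _) ev d0.
have hn' : 1 - d <= Pact P t (trap (- n%:R) n%:R) x0 := hn.
have c1 := (hF.1 t t0 _ (trap_C0 (- n%:R) n%:R)).1 x0.
have c2 := (hF.1 t t0 _ (trapM_C0 (- n%:R) n%:R hg)).1 x0.
move/cvgrPdist_le: c1 => /(_ d d0) c1.
move/cvgrPdist_le: c2 => /(_ d d0) c2.
apply: filterS2 c1 c2 => x h1 h2.
have tx0 := Q_tail t x0 (- n%:R) n%:R hg hMg.
have tx := Q_tail t x (- n%:R) n%:R hg hMg.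
move: tx0 tx h1 h2 hn'.
set A0 := Pact P t g x0; set A := Pact P t g x.
set B0 := Pact P t _ x0; set B := Pact P t _ x.
set C0 := Pact P t (trap _ _) x0; set C := Pact P t (trap _ _) x.
rewrite !ler_norml => /andP[? ?] /andP[? ?] /andP[? ?] /andP[? ?] ?.
have p1 : M * (1 - C0) <= M * d by apply: ler_wpM2l; lra.
have p2 : M * (1 - C) <= M * (2 * d) by apply: ler_wpM2l; lra.
apply/andP; split; lra.
Qed.


Lemma ramp01 (c y : R) : 0 <= ramp c y <= 1.
Proof. by rewrite ramp_ge0 ramp_le1. Qed.

Lemma pw1 (n K y : R) : ramp n y - trap n (K + 1) y <= ramp K y.
Proof.
have /andP[? ?] := ramp01 n y; have /andP[? ?] := ramp01 K y; have /andP[? ?] := trap01 n (K + 1) y.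
case: (leP (K + 1) y) => h1; first by rewrite (ramp1 h1); lra.
case: (leP n y) => h2; first by rewrite trap1 //; [lra|lra].
by rewrite ramp0; lra.
Qed.

Lemma pw2 (n K y : R) : ramp (K - 1) y <= ramp n y + trap (K - 1) (n + 1) y.
Proof.
have /andP[? ?] := ramp01 n y; have /andP[? ?] := ramp01 (K - 1) y; have /andP[? ?] := trap01 (K - 1) (n + 1) y.
case: (leP y (K - 1)) => h1; first by rewrite (ramp0 h1); lra.
case: (leP y (n + 1)) => h2; first by rewrite trap1 //; [lra|lra].
by rewrite (ramp1 (c := n)); lra.
Qed.

Lemma QBp t g a M : 0 <= t -> cb g -> (forall y, `|g y| <= M) -> `|a| <= M ->
  (forall e, 0 < e -> exists K, forall y, K < y -> `|g y - a| <= e) ->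
  forall e, 0 < e -> exists K, forall x, K < x -> `|Pact P t g x - a| <= e.
Proof.
move=> t0 hg hMg ha hlim e e0.
have M0 : 0 <= M by apply: le_trans ha.
pose d := e / (8 * (M + 1)).
have d0 : 0 < d by rewrite /d divr_gt0 //; lra.
have hd : 8 * (M + 1) * d = e by rewrite /d mulrC divfK //; lra.
have [K hK] := hlim (e / 2) ltac:(by rewrite divr_gt0).
have hb : forall y, `|g y - a| <= (e / 2 + 2 * M) + (- (2 * M)) * ramp K y.
  move=> y; case: (leP y K) => yK.
    rewrite ramp0 // mulr0 addr0; apply: le_trans (ler_normB _ _) _.
    have := hMg y; lra.
  have /andP[? ?] := ramp01 K y; have hr0 : 0 <= 1 - ramp K y by lra.
  have := mulr_ge0 M0 hr0; have := hK y yK; lra.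
have hQ : forall x, `|Pact P t g x - a| <= (e / 2 + 2 * M) + (- (2 * M)) * Pact P t (ramp K) x.
  move=> x; have := @Q_approx t x g (fun=> a) _ hg (cb_cst a)
    (cb_add (cb_cst _) (cb_mul (cb_cst _) (cb_ramp K))) hb.
  by rewrite Q_cst Q_aff //; exact: cb_ramp.
have ev : forall y : R, exists N, forall m, (N <= m)%N -> ramp (- m%:R) y = 1.
  move=> y; have [N hN] := ex_bound (1 - y); exists N => m Nm.
  by apply: ramp1; have := hN m Nm; rewrite ler_norml => /andP[] //; lra.
have [n hn] := I_lim (mu1 t 0) (u := fun n : nat => ramp (- n%:R))
  (fun n => cb_ramp _) (fun n y => ramp01 _ _) ev d0.
have hn' : 1 - d <= Pact P t (ramp (- n%:R)) 0 := hn.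
have c1 := (hF.1 t t0 _ (trap_C0 (- n%:R) (K + 1))).2.1.
move/cvgrPdist_le: c1 => /(_ d d0) [K' [_ hK']].
exists `|K'| => x hx.
have x0 : 0 <= x by apply: le_trans (ltW hx).
have hx' : K' < x by apply: le_lt_trans (ler_norm _) hx.
have m1 := Q_mono (- n%:R) t0 x0.
have m2 : Pact P t (ramp (- n%:R)) x - Pact P t (trap (- n%:R) (K + 1)) x <= Pact P t (ramp K) x.
  rewrite -Q_B; [|exact: cb_ramp|exact: cb_trap].
  by apply: Q_le => //; [apply: cb_sub; [exact: cb_ramp|exact: cb_trap]|exact: cb_ramp|exact: pw1].
have m3 := hK' x hx'.
have hQx := hQ x.
move: m3; rewrite sub0r normrN => m3.
have m4 : 1 - Pact P t (ramp K) x <= 2 * d.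
  by have := ler_norm (Pact P t (trap (- n%:R) (K + 1)) x); lra.
have : (2 * M) * (1 - Pact P t (ramp K) x) <= (2 * M) * (2 * d).
  by apply: ler_wpM2l => //; lra.
lra.
Qed.


Lemma Q_D t x f g : cb f -> cb g -> Pact P t (fun y => f y + g y) x = Pact P t f x + Pact P t g x.
Proof. exact: (I_D (mu1 t x)). Qed.

Lemma QBm t g b M : 0 <= t -> cb g -> (forall y, `|g y| <= M) -> `|b| <= M ->
  (forall e, 0 < e -> exists K, forall y, y < K -> `|g y - b| <= e) ->
  forall e, 0 < e -> exists K, forall x, x < K -> `|Pact P t g x - b| <= e.
Proof.
move=> t0 hg hMg hb hlim e e0.
have M0 : 0 <= M by apply: le_trans hb.
pose d := e / (8 * (M + 1)).
have d0 : 0 < d by rewrite /d divr_gt0 //; lra.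
have hd : 8 * (M + 1) * d = e by rewrite /d mulrC divfK //; lra.
have [K hK] := hlim (e / 2) ltac:(by rewrite divr_gt0).
have hbd : forall y, `|g y - b| <= e / 2 + (2 * M) * ramp (K - 1) y.
  move=> y; case: (leP K y) => yK.
    rewrite ramp1; last lra.
    rewrite mulr1; apply: le_trans (ler_normB _ _) _.
    have := hMg y; lra.
  have /andP[? ?] := ramp01 (K - 1) y; have := mulr_ge0 M0 (ramp_ge0 (K - 1) y); have := hK y yK; lra.
have hQ : forall x, `|Pact P t g x - b| <= e / 2 + (2 * M) * Pact P t (ramp (K - 1)) x.
  move=> x; have := @Q_approx t x g (fun=> b) _ hg (cb_cst b)
    (cb_add (cb_cst _) (cb_mul (cb_cst _) (cb_ramp (K - 1)))) hbd.
  by rewrite Q_cst Q_aff //; exact: cb_ramp.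
have ev : forall y : R, exists N, forall m, (N <= m)%N -> 1 + (-1) * ramp m%:R y = 1.
  move=> y; have [N hN] := ex_bound y; exists N => m Nm.
  rewrite ramp0 ?mulr0 ?addr0 //; have := hN m Nm; rewrite ler_norml => /andP[] //.
have cbu : forall n : nat, cb (fun y : R => 1 + (-1) * ramp n%:R y).
  by move=> n; exact: (cb_add (cb_cst 1) (cb_mul (cb_cst (-1)) (cb_ramp _))).
have u01 : forall (n : nat) (y : R), 0 <= 1 + (-1) * ramp n%:R y <= 1.
  by move=> n y; have /andP[? ?] := ramp01 n%:R y; apply/andP; split; lra.
have [n hn] := I_lim (mu1 t 0) (u := fun n : nat => fun y : R => 1 + (-1) * ramp n%:R y)
  cbu u01 ev d0.
have hn' : 1 - d <= Pact P t (fun y : R => 1 + (-1) * ramp n%:R y) 0 := hn.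
rewrite Q_aff in hn'; last exact: cb_ramp.
have c1 := (hF.1 t t0 _ (trap_C0 (K - 1) (n%:R + 1))).2.2.
move/cvgrPdist_le: c1 => /(_ d d0) [K' [_ hK']].
exists (- `|K'|) => x hx.
have x0 : x <= 0 by apply: le_trans (ltW hx) _; rewrite oppr_le0.
have hx' : x < K'.
  apply: lt_le_trans hx _; have := ler_norm (- K'); rewrite normrN; lra.
have m1 := Q_mono n%:R t0 x0.
have m2 : Pact P t (ramp (K - 1)) x <= Pact P t (ramp n%:R) x + Pact P t (trap (K - 1) (n%:R + 1)) x.
  rewrite -Q_D; [|exact: cb_ramp|exact: cb_trap].
  apply: (@Q_le t x (ramp (K - 1)) (fun y => ramp n%:R y + trap (K - 1) (n%:R + 1) y)).
  - exact: cb_ramp.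
  - exact: (cb_add (cb_ramp _) (cb_trap _ _)).
  - exact: pw2.
have m3 := hK' x hx'.
have hQx := hQ x.
move: m3; rewrite sub0r normrN => m3.
have m4 : Pact P t (ramp (K - 1)) x <= 2 * d.
  by have := ler_norm (Pact P t (trap (K - 1) (n%:R + 1)) x); lra.
have : (2 * M) * Pact P t (ramp (K - 1)) x <= (2 * M) * (2 * d).
  by apply: ler_wpM2l => //; lra.
lra.
Qed.


Lemma aux1 (K x : R) : K + 1 <= x -> K <= x.
Proof. lra. Qed.
Lemma aux2 (K x : R) : x <= - K - 1 -> x <= - K.
Proof. lra. Qed.
Lemma trap_le_ramp'' (a b y : R) : ramp b y <= 1 + (-1) * trap a b y.
Proof. have := trap_le_ramp' a b y; lra. Qed.

Lemma arithC1 (M A a gx r r1 c d ep e : R) : 0 <= M ->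
  `|A - a| <= (ep + 2 * M) + - (2 * M) * r -> c <= r1 -> r1 <= r ->
  `|c - 1| <= d -> `|gx - a| <= ep -> 4 * ep = e -> 4 * (M + 1) * d = e ->
  `|A - gx| <= e.
Proof.
move=> M0 hq m2 m1 m3 m4 hep hd.
have := le_trans (normr_ge0 _) m3.
have : (2 * M) * (1 - r) <= (2 * M) * d.
  by apply: ler_wpM2l; [lra|move: m3; rewrite ler_norml => /andP[? ?]; lra].
move: hq m4; rewrite !ler_norml => /andP[? ?] /andP[? ?] ? ?.
apply/andP; split; lra.
Qed.

Lemma arithC2 (M A b gx r r1 c d ep e : R) : 0 <= M ->
  `|A - b| <= ep + (2 * M) * r -> r <= r1 -> r1 <= 1 + (-1) * c ->
  `|c - 1| <= d -> `|gx - b| <= ep -> 4 * ep = e -> 4 * (M + 1) * d = e ->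
  `|A - gx| <= e.
Proof.
move=> M0 hq m1 m2 m3 m4 hep hd.
have := le_trans (normr_ge0 _) m3.
have : (2 * M) * r <= (2 * M) * d.
  by apply: ler_wpM2l; [lra|move: m3; rewrite ler_norml => /andP[? ?]; lra].
move: hq m4; rewrite !ler_norml => /andP[? ?] /andP[? ?] ? ?.
apply/andP; split; lra.
Qed.

Lemma arithC3 (M A B C gx d e : R) : 0 <= M ->
  `|A - B| <= M * (1 - C) -> `|C - 1| <= d -> `|B - gx| <= d ->
  4 * (M + 1) * d = e -> 0 < e -> `|A - gx| <= e.
Proof.
move=> M0 tl m3 m4 hd e0.
have := le_trans (normr_ge0 _) m3.
have : M * (1 - C) <= M * d.
  by apply: ler_wpM2l => //; move: m3; rewrite ler_norml => /andP[? ?]; lra.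
move: tl m4; rewrite !ler_norml => /andP[? ?] /andP[? ?] ? ?.
apply/andP; split; lra.
Qed.

Lemma QC g a b M : cb g -> (forall y, `|g y| <= M) -> `|a| <= M -> `|b| <= M ->
  (forall e, 0 < e -> exists K, forall y, K < y -> `|g y - a| <= e) ->
  (forall e, 0 < e -> exists K, forall y, y < K -> `|g y - b| <= e) ->
  forall e, 0 < e -> \forall t \near 0^'+, forall x, `|Pact P t g x - g x| <= e.
Proof.
move=> hg hMg ha hb hlp hlm e e0.
have M0 : 0 <= M by apply: le_trans ha.
pose d := e / (4 * (M + 1)).
have d0 : 0 < d by rewrite /d divr_gt0 //; lra.
have hd : 4 * (M + 1) * d = e by rewrite /d mulrC divfK //; lra.
pose ep := e / 4.
have ep0 : 0 < ep by rewrite /ep divr_gt0.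
have hep : 4 * ep = e by rewrite /ep mulrC divfK.
have [K1 hK1] := hlp ep ep0.
have [K2 hK2] := hlm ep ep0.
pose K := `|K1| + `|K2| + 1.
have nK1 := ler_norm K1; have nK2 := ler_norm (- K2); rewrite normrN in nK2.
have nK3 := normr_ge0 K1; have nK4 := normr_ge0 K2.
have K0 : 0 <= K by rewrite /K; have := normr_ge0 K1; have := normr_ge0 K2; lra.
have hKa : forall y, K <= y -> `|g y - a| <= ep.
  by move=> y Ky; apply: hK1; rewrite /K in Ky; lra.
have hKb : forall y, y <= - K -> `|g y - b| <= ep.
  by move=> y Ky; apply: hK2; rewrite /K in Ky; lra.
have hba : forall y, `|g y - a| <= (ep + 2 * M) + (- (2 * M)) * ramp K y.
  move=> y; case: (leP y K) => yK.
    rewrite ramp0 // mulr0 addr0; apply: le_trans (ler_normB _ _) _.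
    have := hMg y; lra.
  have /andP[? ?] := ramp01 K y; have hr0 : 0 <= 1 - ramp K y by lra.
  have := mulr_ge0 M0 hr0; have := hKa y (ltW yK); lra.
have hbb : forall y, `|g y - b| <= ep + (2 * M) * ramp (- K - 1) y.
  move=> y; case: (leP y (- K)) => yK.
    have /andP[? ?] := ramp01 (- K - 1) y; have := mulr_ge0 M0 (ramp_ge0 (- K - 1) y); have := hKb y yK; lra.
  rewrite ramp1; last lra.
  rewrite mulr1; apply: le_trans (ler_normB _ _) _.
  have := hMg y; lra.
have n1 := hF.2 _ (trap_C0 (K + 1) (K + 1)) d d0.
have n2 := hF.2 _ (trap_C0 (- K - 1) (- K - 1)) d d0.
have n3 := hF.2 _ (trap_C0 (- K - 1) (K + 1)) d d0.
have n4 := hF.2 _ (trapM_C0 (- K - 1) (K + 1) hg) d d0.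
have n5 := nbhs_right_gt (0 : R).
near=> t.
have t0 : 0 < t by near: t; exact: n5.
have h1 : forall x, `|Pact P t (trap (K + 1) (K + 1)) x - trap (K + 1) (K + 1) x| <= d.
  by near: t; exact: n1.
have h2 : forall x, `|Pact P t (trap (- K - 1) (- K - 1)) x - trap (- K - 1) (- K - 1) x| <= d.
  by near: t; exact: n2.
have h3 : forall x, `|Pact P t (trap (- K - 1) (K + 1)) x - trap (- K - 1) (K + 1) x| <= d.
  by near: t; exact: n3.
have h4 : forall x, `|Pact P t (fun y => g y * trap (- K - 1) (K + 1) y) x
    - g x * trap (- K - 1) (K + 1) x| <= d.
  by near: t; exact: n4.
move=> x.
have t0' := ltW t0.
case: (leP (K + 1) x) => xK1.
  have hq : `|Pact P t g x - a| <= (ep + 2 * M) + (- (2 * M)) * Pact P t (ramp K) x.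
    have := @Q_approx t x g (fun=> a) _ hg (cb_cst a)
      (cb_add (cb_cst _) (cb_mul (cb_cst _) (cb_ramp K))) hba.
    by rewrite Q_cst Q_aff //; exact: cb_ramp.
  have m1 := Q_mono K t0' xK1.
  have m2 : Pact P t (trap (K + 1) (K + 1)) (K + 1) <= Pact P t (ramp K) (K + 1).
    apply: Q_le; [exact: cb_trap|exact: cb_ramp|] => y.
    by have := trap_le_ramp (K + 1) (K + 1) y; rewrite addrK.
  have m3 := h1 (K + 1); rewrite trap1 // in m3.
  have m4 := hKa x (aux1 xK1).
  exact: (arithC1 M0 hq m2 m1 m3 m4 hep hd).
case: (leP x (- K - 1)) => xK2.
  have hq : `|Pact P t g x - b| <= ep + (2 * M) * Pact P t (ramp (- K - 1)) x.
    have := @Q_approx t x g (fun=> b) _ hg (cb_cst b)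
      (cb_add (cb_cst _) (cb_mul (cb_cst _) (cb_ramp (- K - 1)))) hbb.
    by rewrite Q_cst Q_aff //; exact: cb_ramp.
  have m1 := Q_mono (- K - 1) t0' xK2.
  have m2 : Pact P t (ramp (- K - 1)) (- K - 1) <=
      Pact P t (fun y => 1 + (-1) * trap (- K - 1) (- K - 1) y) (- K - 1).
    apply: Q_le; [exact: cb_ramp|exact: (cb_add (cb_cst 1) (cb_mul (cb_cst (-1)) (cb_trap _ _)))|] => y.
    exact: trap_le_ramp''.
  rewrite Q_aff in m2; last exact: cb_trap.
  have m3 := h2 (- K - 1); rewrite trap1 // in m3.
  have m4 := hKb x (aux2 xK2).
  exact: (arithC2 M0 hq m1 m2 m3 m4 hep hd).
have tl := Q_tail t x (- K - 1) (K + 1) hg hMg.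
have hx1 : - K - 1 <= x := ltW xK2.
have hx2 : x <= K + 1 := ltW xK1.
have m3 := h3 x; rewrite (trap1 hx1 hx2) in m3.
have m4 := h4 x; rewrite (trap1 hx1 hx2) mulr1 in m4.
exact: (arithC3 M0 tl m3 m4 hd e0).
Unshelve. all: by end_near.
Qed.

End main.


Section ext.
Variable R : realType.

Lemma ereal_fun_meas d (T : measurableType d) (F : \bar R -> T) :
  measurable_fun setT (F \o EFin) -> measurable_fun setT F.
Proof.
move=> mF _ B mB; rewrite setTI.
have e : F @^-1` B = EFin @` ((F \o EFin) @^-1` B) `|` ((F @^-1` B) `&` [set +oo%E])
    `|` ((F @^-1` B) `&` [set -oo%E]).
  apply/seteqP; split => [[r| |] Hx|x].
  - by left; left; exists r.
  - by left; right.
  - by right.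
  - by case => [[[r Hr <-]|[]]|[]].
rewrite e; apply: measurableU; first apply: measurableU.
- apply: measurable_image_EFin; have := mF measurableT B mB; by rewrite setTI.
- have [hB|nB] := pselect (B (F +oo%E)).
    rewrite (_ : _ `&` _ = [set +oo%E]); first exact: emeasurable_set1.
    by apply/seteqP; split => [x [_ ->]|x ->] //.
  rewrite (_ : _ `&` _ = set0) //; apply/seteqP; split => [x [Hx xe]|x //].
  by apply: nB; rewrite -xe.
- have [hB|nB] := pselect (B (F -oo%E)).
    rewrite (_ : _ `&` _ = [set -oo%E]); first exact: emeasurable_set1.
    by apply/seteqP; split => [x [_ ->]|x ->] //.
  rewrite (_ : _ `&` _ = set0) //; apply/seteqP; split => [x [Hx xe]|x //].
  by apply: nB; rewrite -xe.
Qed.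

Lemma cont_meas (f : \bar R -> R) : continuous f -> measurable_fun setT (fun y => (f y)%:E).
Proof.
move=> cf; apply: ereal_fun_meas; apply/measurable_EFinP.
apply: continuous_measurable_fun => r.
apply/cvgrPdist_le => e e0.
exact: ((cvgrPdist_le _ _).1 (cf r%:E) e e0).
Qed.

End ext.


Section ext2.
Variable R : realType.

Lemma g_cont (f : \bar R -> R) : continuous f -> continuous (fun r : R => f r%:E).
Proof.
move=> cf r; apply/cvgrPdist_le => e e0.
exact: ((cvgrPdist_le _ _).1 (cf r%:E) e e0).
Qed.

Lemma g_limp (f : \bar R -> R) : continuous f ->
  forall e, 0 < e -> exists K, forall y : R, K < y -> `|f y%:E - f +oo%E| <= e.
Proof.
move=> cf e e0; have [M [_ hM]] := (cvgrPdist_le _ _).1 (cf +oo%E) e e0.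
by exists M => y My; rewrite distrC; apply: hM; rewrite lte_fin.
Qed.

Lemma g_limm (f : \bar R -> R) : continuous f ->
  forall e, 0 < e -> exists K, forall y : R, y < K -> `|f y%:E - f -oo%E| <= e.
Proof.
move=> cf e e0; have [M [_ hM]] := (cvgrPdist_le _ _).1 (cf -oo%E) e e0.
by exists M => y My; rewrite distrC; apply: hM; rewrite lte_fin.
Qed.

Lemma cont_bounded (f : \bar R -> R) : continuous f -> exists M, forall x, `|f x| <= M.
Proof.
move=> cf.
have [M1 h1] := g_limp cf ltr01.
have [M2 h2] := g_limm cf ltr01.
have cg := g_cont cf.
pose h := fun r : R => `|f r%:E|.
have ch : continuous h.
  move=> r; apply: (continuous_comp (cg r)); exact: (@norm_continuous _ R^o).
have am : Num.min M2 M1 <= M1 by rewrite ge_min lexx orbT.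
have [c _ Hc] := EVT_max am (@continuous_subspaceT _ _ _ h ch).
exists (`|f +oo%E| + `|f -oo%E| + 1 + h c) => -[r| |].
- have := normr_ge0 (f +oo%E); have := normr_ge0 (f -oo%E); have := normr_ge0 (f c%:E).
  rewrite -/(h c).
  case: (ltP M1 r) => r1.
    have := h1 r r1; have := ler_distD (f +oo%E) (f r%:E) 0; rewrite !subr0.
    rewrite distrC; lra.
  case: (ltP r M2) => r2.
    have := h2 r r2; have := ler_distD (f -oo%E) (f r%:E) 0; rewrite !subr0.
    rewrite distrC; lra.
  have : h r <= h c.
    apply: Hc; rewrite in_itv /= r1 andbT ge_min r2 //.
  rewrite /h; lra.
- have := normr_ge0 (f -oo%E); have := normr_ge0 (f c%:E); rewrite -/(h c); lra.
- have := normr_ge0 (f +oo%E); have := normr_ge0 (f c%:E); rewrite -/(h c); lra.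
Qed.
End ext2.


Section a. Variable R : realType.
Lemma cont_at_pinfty (h : \bar R -> R) :
  (forall e, 0 < e -> exists K : R, forall y, (K%:E < y)%E -> `|h +oo%E - h y| <= e) ->
  {for +oo%E, continuous h}.
Proof.
move=> H.
have FF : Filter (nbhs (+oo%E : \bar R)) by apply: ereal_nbhs_filter.
apply/(@cvgrPdist_le _ _ _ _ FF) => e e0; have [K hK] := H e e0.
by exists K; split => //; rewrite num_real.
Qed.
Lemma cont_at_ninfty (h : \bar R -> R) :
  (forall e, 0 < e -> exists K : R, forall y, (y < K%:E)%E -> `|h -oo%E - h y| <= e) ->
  {for -oo%E, continuous h}.
Proof.
move=> H.
have FF : Filter (nbhs (-oo%E : \bar R)) by apply: ereal_nbhs_filter.
apply/(@cvgrPdist_le _ _ _ _ FF) => e e0; have [K hK] := H e e0.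
by exists K; split => //; rewrite num_real.
Qed.
End a.

Section fin.
Variables (R : realType) (P : R -> R.-pker R ~> R).

Lemma Pt_fin t (f : \bar R -> R) r : continuous f ->
  Ptilde_act P t f r%:E = Pact P t (fun y => f y%:E) r.
Proof.
move=> cf; rewrite /Ptilde_act /Pact /= /pushEFin.
have [M hM] := cont_bounded cf.
have cbg : cb (fun y : R => f y%:E).
  by split; [exact: g_cont|exists M => y; exact: hM].
have intf : (P t r).-integrable (EFin @^-1` setT) ((fun y => (f y)%:E) \o EFin).
  rewrite preimage_setT; exact: (cb_int (prob_kernel r) cbg).
rewrite (@integral_pushforward _ _ _ _ R EFin (@EFin_measurable R setT) (P t r) setT
  (fun y => (f y)%:E) (cont_meas cf) intf measurableT).
by rewrite preimage_setT.
Qed.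

Lemma Pt_pinfty t (f : \bar R -> R) : continuous f -> Ptilde_act P t f +oo%E = f +oo%E.
Proof.
move=> cf; rewrite /Ptilde_act /= integral_dirac //; last exact: cont_meas.
by rewrite diracT mul1e.
Qed.

Lemma Pt_ninfty t (f : \bar R -> R) : continuous f -> Ptilde_act P t f -oo%E = f -oo%E.
Proof.
move=> cf; rewrite /Ptilde_act /= integral_dirac //; last exact: cont_meas.
by rewrite diracT mul1e.
Qed.

End fin.

Lemma Pt_meas (R : realType) (P : R -> R.-pker R ~> R) t (A : set (\bar R)) :
  measurable A -> measurable_fun setT (fun y => Ptilde P t y A).
Proof.
move=> mA; apply: ereal_fun_meas => /=.
have mA' : measurable (EFin @^-1` A).
  by have := @EFin_measurable R setT measurableT A mA; rewrite setTI.
exact: (measurable_kernel (P t) _ mA').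
Qed.

Unset Implicit Arguments.
Set Strict Implicit.

Theorem proposition2p8 (R : realType) (P : R -> R.-pker R ~> R) :
  markov_semigroup P -> feller P -> stoch_monotone P ->
  ((forall (x : \bar R) (A : set (\bar R)), measurable A ->
      Ptilde P 0 x A = \d_x A) /\
   (forall s t : R, 0 <= s -> 0 <= t -> forall (x : \bar R) (A : set (\bar R)),
      measurable A ->
      Ptilde P (s + t) x A = (\int[Ptilde P s x]_y Ptilde P t y A)%E)) /\
  (forall t : R, 0 <= t -> forall f : \bar R -> R, continuous f ->
      continuous (Ptilde_act P t f)) /\
  (forall f : \bar R -> R, continuous f -> forall e : R, 0 < e ->
      \forall t \near 0^'+, forall x : \bar R,
        `|Ptilde_act P t f x - f x| <= e).
Proof.
move=> [hS0 hS] hF hM.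
have mpre : forall A : set (\bar R), measurable A -> measurable (EFin @^-1` A).
  by move=> A mA; have := @EFin_measurable R setT measurableT A mA; rewrite setTI.
split; [split|split].
- move=> [r| |] A mA //=.
  rewrite /pushEFin /pushforward hS0; last exact: mpre.
  by rewrite !diracE.
- move=> s t s0 t0 [r| |] A mA /=.
  + rewrite /pushEFin /pushforward hS //; last exact: mpre.
    rewrite (@ge0_integral_pushforward _ _ _ _ R EFin (@EFin_measurable R setT) (P s r) setT
      (fun y => Ptilde P t y A) measurableT (measurable_funTS (Pt_meas P t mA))) //.
  + rewrite integral_dirac //; last exact: measurable_funTS (Pt_meas P t mA).
    by rewrite diracT mul1e.
  + rewrite integral_dirac //; last exact: measurable_funTS (Pt_meas P t mA).
    by rewrite diracT mul1e.
- move=> t t0 f cf.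
  have [M hMf] := cont_bounded cf.
  have cbg : cb (fun y : R => f y%:E).
    by split; [exact: g_cont|exists M => y; exact: hMf].
  have HH := fun r => Pt_fin P t r cf.
  move=> [r| |].
  + apply/cvgrPdist_le => e e0.
    have h := (cvgrPdist_le _ _).1 (@QA _ _ hF _ t0 _ cbg r) e e0.
    suff : \forall s \near r, `|Ptilde_act P t f r%:E - Ptilde_act P t f s%:E| <= e by [].
    by near=> s; rewrite !HH; near: s; exact: h.
  + apply: cont_at_pinfty => e e0.
    have [K hK] := QBp hF hM t0 cbg (fun y => hMf _) (hMf +oo%E) (g_limp cf) e0.
    exists K => -[y| |] Ky.
    * by rewrite Pt_pinfty // HH distrC; apply: hK; rewrite -lte_fin.
    * by rewrite Pt_pinfty // subrr normr0 ltW.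
    * by [].
  + apply: cont_at_ninfty => e e0.
    have [K hK] := QBm hF hM t0 cbg (fun y => hMf _) (hMf -oo%E) (g_limm cf) e0.
    exists K => -[y| |] Ky.
    * by rewrite Pt_ninfty // HH distrC; apply: hK; rewrite -lte_fin.
    * by [].
    * by rewrite Pt_ninfty // subrr normr0 ltW.
- move=> f cf e e0.
  have [M hMf] := cont_bounded cf.
  have cbg : cb (fun y : R => f y%:E).
    by split; [exact: g_cont|exists M => y; exact: hMf].
  have h := QC hF hM cbg (fun y => hMf _) (hMf +oo%E) (hMf -oo%E) (g_limp cf) (g_limm cf) e0.
  near=> t.
  have ht : forall x, `|Pact P t (fun y => f y%:E) x - f x%:E| <= e by near: t; exact: h.
  move=> -[r| |].
  + by rewrite Pt_fin //; exact: ht.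
  + by rewrite Pt_pinfty // subrr normr0 ltW.
  + by rewrite Pt_ninfty // subrr normr0 ltW.
Unshelve. all: by end_near.
Qed.
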